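(* Let $n\ge 3$ and let $q$ be a real number with $0<q\le 1/6$. Consider the Markov chain on $\{0,1,\dots,n-1\}$ with $n\times n$ transition probability matrix $\mathbf P(q)=(P_{ij})$ given by: $P_{00}=1-q$, $P_{01}=q$; $P_{10}=5q$, $P_{11}=1-6q$, $P_{12}=q$; for $2\le i\le n-2$: $P_{i0}=4q$, $P_{i,i-1}=q$, $P_{ii}=1-6q$, $P_{i,i+1}=q$; $P_{n-1,0}=5q$, $P_{n-1,n-2}=q$, $P_{n-1,n-1}=1-6q$; all other entries $0$. Then the steady state probability vector $\vec\pi=(\pi_0,\dots,\pi_{n-1})$ (the unique probability vector with $\vec\pi=\vec\pi\mathbf P(q)$) is given by $\pi_i=\dfrac{2B_{n-i}}{b_{n+1}}=\dfrac{B_{n-i}}{\sum_{l=1}^n B_l}$ for $i=0,1,\dots,n-1$; in particular it does not depend on $q$.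
   Context: The balancing numbers $B_m$ are defined by $B_0=0$, $B_1=1$, $B_{m+1}=6B_m-B_{m-1}$. The cobalancing numbers $b_m$ are defined by $b_0=0$, $b_1=0$, $b_{m+1}=6b_m-b_{m-1}+2$. *)

(* Defs.v *)
From HB Require Import structures.
From mathcomp Require Import all_boot all_order all_algebra.
Set Implicit Arguments. Unset Strict Implicit. Unset Printing Implicit Defensive.
Import Order.TTheory GRing.Theory Num.Theory.
Local Open Scope ring_scope.

Fixpoint bal (m : nat) : int :=
  match m with
  | 0%N => 0
  | 1%N => 1
  | (k.+1) as m1 => 6 * bal k - bal k.-1
  end.

Fixpoint cobal (m : nat) : int :=
  match m with
  | 0%N => 0
  | 1%N => 0
  | (k.+1) as m1 => 6 * cobal k - cobal k.-1 + 2
  end.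

Definition Pentry {R : ringType} (n : nat) (q : R) (i j : nat) : R :=
  if i == 0%N then
    (if j == 0%N then 1 - q else if j == 1%N then q else 0)
  else if i == 1%N then
    (if j == 0%N then 5 * q else if j == 1%N then 1 - 6 * q
     else if j == 2%N then q else 0)
  else if i == n.-1 then
    (if j == 0%N then 5 * q else if j == n.-2 then q
     else if j == n.-1 then 1 - 6 * q else 0)
  else
    (if j == 0%N then 4 * q else if j == i.-1 then q
     else if j == i then 1 - 6 * q else if j == i.+1 then q else 0).

Definition Pmat {R : ringType} (n : nat) (q : R) : 'M[R]_n :=
  \matrix_(i < n, j < n) Pentry n q i j.

Definition is_prob_vec {R : numDomainType} (n : nat) (p : 'rV[R]_n) : Prop :=
  (forall i, 0 <= p 0 i) /\ \sum_(i < n) p 0 i = 1.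

(* Main.v *)
Require Import Defs.
From HB Require Import structures.
From mathcomp Require Import all_boot all_order all_algebra.
From mathcomp Require Import zify ring lra.
Import Order.TTheory GRing.Theory Num.Theory.
Local Open Scope ring_scope.
Lemma balS k : bal k.+2 = 6 * bal k.+1 - bal k.
Proof. by []. Qed.
Lemma cobalS k : cobal k.+2 = 6 * cobal k.+1 - cobal k + 2.
Proof. by []. Qed.
Lemma entry (R : ringType) m (q : R) (i j : nat) : (i < m.+3)%N -> (0 < j < m.+3)%N ->
  Pentry m.+3 q i j = (if i == j.-1 then q else 0) + (if i == j then 1 - 6*q else 0) + (if i == j.+1 then q else 0).
Proof.
move=> Hi Hj; rewrite /Pentry /=.
repeat (case: eqP => ? /=); subst; try lia; rewrite ?addr0 ?add0r //.
Qed.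
Lemma entry0 (R : comRingType) m (q : R) (i : nat) : (i < m.+3)%N ->
  Pentry m.+3 q i 0 = 4 * q + (if i == 0%N then 1 - 5*q else 0) + (if i == 1%N then q else 0) + (if i == m.+2 then q else 0).
Proof.
move=> Hi; rewrite /Pentry /=.
repeat (case: eqP => ? /=); subst; try lia; rewrite ?addr0 ?add0r //; ring.
Qed.
Definition Sn k : int := \sum_(1 <= l < k.+1) bal l.
Lemma SnS k : Sn k.+1 = Sn k + bal k.+1.
Proof. by rewrite /Sn big_nat_recr. Qed.
Lemma Sn0 : Sn 0 = 0. Proof. by rewrite /Sn big_geq. Qed.
Lemma bal_mono k : (0 <= bal k <= bal k.+1)%R.
Proof. elim: k => [|k IH] //. rewrite balS. lia. Qed.
Lemma bal_pos k : (1 <= bal k.+1)%R.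
Proof. elim: k => [|k IH] //. have := bal_mono k.+1. lia. Qed.
Lemma Sfact k : Sn k.+2 - 6 * Sn k.+1 + Sn k = 1.
Proof. elim: k => [|k IH]; first by rewrite !SnS Sn0.
have := SnS k.+2; have := SnS k.+1; have := SnS k; have := balS k.+1; lia. Qed.
Lemma cobal_Sn k : cobal k.+1 = 2 * Sn k.
Proof.
suff : cobal k.+1 = 2 * Sn k /\ cobal k.+2 = 2 * Sn k.+1 by case.
elim: k => [|k [IH1 IH2]]; first by rewrite !SnS Sn0.
split=> //. rewrite cobalS IH1 IH2. have := Sfact k. lia. Qed.
Lemma col0fact k : 5 * bal k.+1 - bal k - 1 = 4 * Sn k.+1.
Proof. elim: k => [|k IH]; first by rewrite SnS Sn0.
have := SnS k.+1; have := balS k; lia. Qed.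
Lemma Sn_pos k : 0 < Sn k.+1.
Proof. elim: k => [|k IH]; rewrite SnS; first by rewrite Sn0.
have := bal_pos k.+1; lia. Qed.
Lemma sum_rev k : \sum_(i < k) bal (k - i) = Sn k.
Proof. elim: k => [|k IH]; first by rewrite big_ord0 Sn0.
rewrite big_ord_recl subn0 SnS -IH addrC; congr (_ + _).
Qed.
Lemma intr_sumz (R : ringType) k (F : 'I_k -> int) :
  ((\sum_(i < k) F i)%:~R : R) = \sum_(i < k) (F i)%:~R.
Proof. exact: raddf_sum. Qed.
Lemma Sn_sumR (R : ringType) k : ((Sn k)%:~R : R) = \sum_(1 <= l < k.+1) (bal l)%:~R.
Proof. elim: k => [|k IH]; first by rewrite Sn0 big_geq.
by rewrite SnS intrD IH [RHS]big_nat_recr. Qed.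

Section Mat.
Variable R : realFieldType.
Variable m : nat.
Variable q : R.
Definition pn (p : 'rV[R]_(m.+3)) (k : nat) : R :=
  if (k < m.+3)%N then p 0 (inord k) else 0.
Lemma pnE (p : 'rV[R]_(m.+3)) (i : 'I_(m.+3)) : pn p i = p 0 i.
Proof. by rewrite /pn ltn_ord inord_val. Qed.
Lemma sum_delta (p : 'rV[R]_(m.+3)) k (c : R) :
  \sum_(i < m.+3) p 0 i * (if (i:nat) == k then c else 0) = pn p k * c.
Proof.
rewrite /pn; case: ltnP => Hk.
- rewrite (bigD1 (Ordinal Hk)) //= eqxx big1 ?addr0.
    by congr (p 0 _ * c); apply: val_inj; rewrite /= inordK.
  move=> i /eqP Hi; case: eqP; last by rewrite mulr0.
  by move=> E; exfalso; apply: Hi; apply: val_inj.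
- rewrite mul0r big1 // => i _.
  have : (i : nat) != k by rewrite neq_ltn (leq_trans (ltn_ord i) Hk).
  by move/negPf => ->; rewrite mulr0.
Qed.
Lemma colE (p : 'rV[R]_(m.+3)) (j : 'I_(m.+3)) : (0 < j)%N ->
  (p *m Pmat m.+3 q) 0 j = pn p j.-1 * q + pn p j * (1 - 6 * q) + pn p j.+1 * q.
Proof.
move=> Hj0. have Hj : (0 < j < m.+3)%N by rewrite Hj0 ltn_ord.
rewrite !mxE.
under eq_bigr => i _ do rewrite !mxE (@entry _ _ q _ _ (ltn_ord i) Hj) !mulrDr.
by rewrite !big_split /= !sum_delta.
Qed.
Lemma col0E (p : 'rV[R]_(m.+3)) (j : 'I_(m.+3)) : (j : nat) = 0%N ->
  (p *m Pmat m.+3 q) 0 j = (\sum_(i < m.+3) p 0 i) * (4 * q)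
     + pn p 0 * (1 - 5 * q) + pn p 1 * q + pn p m.+2 * q.
Proof.
move=> Hj0. rewrite !mxE.
under eq_bigr => i _ do rewrite !mxE Hj0 (@entry0 _ _ q _ (ltn_ord i)) !mulrDr.
by rewrite !big_split /= !sum_delta mulr_suml.
Qed.
End Mat.
Arguments pn {R m}.
Arguments pnE {R m}.
Arguments colE {R m q}.
Arguments col0E {R m q}.

Theorem theorem2p2 (R : realFieldType) (n : nat) (q : R) :
  (3 <= n)%N -> 0 < q -> q <= 1 / 6 ->
  let pi : 'rV[R]_n :=
    \row_(i < n) (2 * (bal (n - i))%:~R / (cobal n.+1)%:~R) in
  [/\ forall i : 'I_n,
        pi 0 i = (bal (n - i))%:~R / \sum_(1 <= l < n.+1) (bal l)%:~R,
      is_prob_vec pi,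
      pi *m Pmat n q = pi &
      forall p : 'rV[R]_n, is_prob_vec p -> p *m Pmat n q = p -> p = pi].
Proof.
move=> Hn q0 q6.
case: n Hn => [|[|[|m]]] // _ pi.
set s : R := (Sn m.+3)%:~R.
have spos : 0 < s by rewrite ltr0z Sn_pos.
have sne : s != 0 by rewrite gt_eqF.
have C1 : forall i : 'I_(m.+3), pi 0 i = (bal (m.+3 - i))%:~R / s.
  move=> i; rewrite /pi mxE cobal_Sn intrM -/s /=.
  by field; rewrite sne.
have piE : forall k, pn pi k = (bal (m.+3 - k))%:~R / s.
  move=> k; rewrite /pn; case: ltnP => Hk.
    by rewrite C1 inordK.
  by rewrite (_ : (m.+3 - k = 0)%N) ?mul0r //; lia.
have Ssum : \sum_(i < m.+3) (bal (m.+3 - i))%:~R = s :> R.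
  by rewrite -intr_sumz sum_rev.
have Psum : \sum_(i < m.+3) pi 0 i = 1.
  under eq_bigr => i _ do rewrite C1.
  by rewrite -mulr_suml Ssum divff.
split.
- by move=> i; rewrite C1 -Sn_sumR.
- split=> // i; rewrite C1 divr_ge0 ?(ltW spos) // ler0z.
  by case/andP: (bal_mono (m.+3 - i)).
- apply/rowP => j; case: (posnP j) => Hj.
  + rewrite col0E // Psum !piE -pnE Hj piE.
    have H := congr1 (fun x : int => (x%:~R : R)) (col0fact m.+2).
    rewrite /= !intrB !intrM -/s /= in H.
    rewrite subn0 subn1 /= (_ : (m.+3 - m.+2 = 1)%N); last by lia.
    have -> : 4 * q = (4 * s) * q / s by field.
    rewrite -H. by field.
  + rewrite colE // !piE -pnE piE.
    have Hjn := ltn_ord j.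
    rewrite (_ : (m.+3 - j.-1 = (m.+3 - j.+1).+2)%N); last by lia.
    rewrite (_ : (m.+3 - j = (m.+3 - j.+1).+1)%N); last by lia.
    rewrite balS intrB intrM /=. by field.
- move=> p [p0 p1] pP.
  have rel : forall j, (0 < j < m.+3)%N -> pn p j.-1 = 6 * pn p j - pn p j.+1.
    move=> j /andP[Hj0 Hj1].
    have := congr1 (fun M : 'rV[R]_(m.+3) => M 0 (Ordinal Hj1)) pP.
    rewrite /= colE // -(pnE p (Ordinal Hj1)) /= => E.
    have : (pn p j.-1 - 6 * pn p j + pn p j.+1) * q = 0.
      rewrite -[RHS](subrr (pn p j)) -[X in _ = X - _]E. ring.
    move/eqP; rewrite mulf_eq0 (gt_eqF q0) orbF => /eqP; lra.
  set c := pn p m.+2.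
  have ind : forall k, (k.+1 < m.+3)%N ->
      pn p (m.+2 - k) = c * (bal k.+1)%:~R /\ pn p (m.+1 - k) = c * (bal k.+2)%:~R.
    elim=> [|k IH] Hk.
      rewrite !subn0; split; first by rewrite /c (_ : (bal 1)%:~R = 1 :> R) ?mulr1.
      have h0 : pn p m.+3 = 0 by rewrite /pn ltnn.
      rewrite (rel m.+2) //= h0 -/c (_ : (bal 2)%:~R = 6 :> R) //. ring.
    have [_ IH2] := IH (ltnW Hk).
    rewrite subSS; split=> //.
    have := rel (m.+1 - k)%N; rewrite (_ : ((m.+1 - k).-1 = m - k)%N); last by lia.
    rewrite (_ : ((m.+1 - k).+1 = m.+2 - k)%N); last by lia.
    move=> ->; last by apply/andP; split; lia.
    rewrite IH2 (proj1 (IH (ltnW Hk))) balS intrB intrM /=. ring.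
  have pform : forall i : 'I_(m.+3), p 0 i = c * (bal (m.+3 - i))%:~R.
    move=> i; have Hi := ltn_ord i; rewrite -pnE.
    case: (posnP i) => Hi0.
      have [_ H2] := ind m.+1 (leqnn _).
      by rewrite subnn in H2; rewrite Hi0 subn0 H2.
    have Hk : ((m.+2 - i).+1 < m.+3)%N by lia.
    have [H1 _] := ind _ Hk.
    rewrite (_ : (m.+2 - (m.+2 - i) = i)%N) in H1; last by lia.
    by rewrite H1 (_ : ((m.+2 - i).+1 = m.+3 - i)%N) //; lia.
  have cs : c * s = 1.
    rewrite -p1 -Ssum mulr_sumr; apply: eq_bigr => i _; by rewrite pform.
  have ce : c = s^-1 by rewrite -[s^-1]mul1r -cs mulfK.
  apply/rowP => i; rewrite pform C1 ce mulrC.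
  done.
Qed.
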